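(* Let $\alpha:A^{\Delta}\to(H,V)\circ{\cal U}_1$ be a homomorphism, where $(H,V)$ is a finite forest algebra with $H$ idempotent and commutative, and let $\pi$ be the projection homomorphism from $(H,V)\circ{\cal U}_1$ onto $(H,V)$. If $\beta=\pi\alpha$ is nonconfusing, then $\alpha$ is nonconfusing.
   Context: $A^{\Delta}$: free forest algebra of forests and contexts over $A$. Forest algebra: additive monoid $H$, monoid $V$ acting faithfully on the left, containing $g\mapsto g+h$, $g\mapsto h+g$. Wreath product $(H_1,V_1)\circ(H_2,V_2)=(H_1\times H_2,V_1\times V_2^{H_1})$ with componentwise addition and $(v,f)(h_1,h_2)=(vh_1,f(h_1)h_2)$; $\pi(h_1,h_2)=h_1$, $\pi(v,f)=v$. ${\cal U}_1=(\{0,\infty\},\{1,0\})$ with $0+x=x$, $\infty+x=\infty$, $1$ the identity and $0$ the constant map to $\infty$. Reachability: $h\le h'$ iff $h=vh'$ for some $v$; classes of mutual reachability; $h>\Gamma$ means strictly above. For $\gamma$ and class $\Gamma$, $\gamma_\Gamma$ is the quotient identifying $\{h:h\not>\Gamma\}$ to one absorbing $\infty$; $s^{\gamma_\Gamma}$ relabels each node with subtree $at$ by $(a,\gamma_\Gamma(t))$. $\sim_k$ on forests over an alphabet $B$: $\sim_0$ total, $s\sim_{k+1}s'$ iff the sets $\{(b_i,[s_i]_{\sim_k})\}$ for $s=\sum b_is_i$, $s'=\sum b'_js'_j$ coincide. $s_1\equiv_{\gamma,k,\Gamma}s_2$ iff $(s_1)^{\gamma_\Gamma}\sim_k(s_2)^{\gamma_\Gamma}$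 and $\gamma(s_1),\gamma(s_2)\in\Gamma$. $\gamma$ is nonconfusing if there is $k>0$ such that for every reachability class $\Gamma$ of its target, $s_1\equiv_{\gamma,k,\Gamma}s_2$ implies $\gamma(s_1)=\gamma(s_2)$. *)

(* Defs.v *)
From Stdlib Require Import ClassicalEpsilon.
From mathcomp Require Import all_boot.
Set Implicit Arguments. Unset Strict Implicit. Unset Printing Implicit Defensive.

Inductive tree (A : Type) : Type := Node : A -> seq (tree A) -> tree A.
Arguments Node {A} _ _.
Definition forest (A : Type) := seq (tree A).

(* contexts: forests with exactly one hole.
   CHole l r        = l + [] + r
   CNode l a c r    = l + a(c) + r *)
Inductive ctx (A : Type) : Type :=
| CHole : forest A -> forest A -> ctx A
| CNode : forest A -> A -> ctx A -> forest A -> ctx A.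
Arguments CHole {A} _ _.
Arguments CNode {A} _ _ _ _.

Fixpoint plug {A} (c : ctx A) (h : forest A) : forest A :=
  match c with
  | CHole l r => l ++ h ++ r
  | CNode l a c' r => l ++ Node a (plug c' h) :: r
  end.

Definition ctx_wrap {A} (l : forest A) (d : ctx A) (r : forest A) : ctx A :=
  match d with
  | CHole l' r' => CHole (l ++ l') (r' ++ r)
  | CNode l' a c r' => CNode (l ++ l') a c (r' ++ r)
  end.

Fixpoint ctx_comp {A} (c d : ctx A) : ctx A :=
  match c with
  | CHole l r => ctx_wrap l d r
  | CNode l a c' r => CNode l a (ctx_comp c' d) r
  end.

Record falg : Type := FAlg {
  fH : Type; fV : Type;
  fzero : fH; fadd : fH -> fH -> fH;
  fone : fV; fmul : fV -> fV -> fV;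
  fact : fV -> fH -> fH }.
Arguments fzero : clear implicits.
Arguments fadd : clear implicits.
Arguments fone : clear implicits.
Arguments fmul : clear implicits.
Arguments fact : clear implicits.

Definition is_falg (T : falg) : Prop :=
  (forall x y z, fadd T x (fadd T y z) = fadd T (fadd T x y) z) /\
  (forall x, fadd T (fzero T) x = x) /\ (forall x, fadd T x (fzero T) = x) /\
  (forall u v w, fmul T u (fmul T v w) = fmul T (fmul T u v) w) /\
  (forall v, fmul T (fone T) v = v) /\ (forall v, fmul T v (fone T) = v) /\
  (forall v w h, fact T (fmul T v w) h = fact T v (fact T w h)) /\
  (forall h, fact T (fone T) h = h) /\
  (forall v w, (forall h, fact T v h = fact T w h) -> v = w) /\
  (forall h, (exists v, forall g, fact T v g = fadd T g h)
          /\ (exists v, forall g, fact T v g = fadd T h g)).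

Definition finite_type (X : Type) : Prop := exists s : seq X, forall x, List.In x s.

Definition finite_falg (T : falg) : Prop := finite_type (fH T) /\ finite_type (fV T).

Definition free_falg (A : Type) : falg :=
  @FAlg (forest A) (ctx A) [::] (@cat _) (CHole [::] [::]) (@ctx_comp A) (@plug A).

Definition is_hom (S T : falg) (fh : fH S -> fH T) (fv : fV S -> fV T) : Prop :=
  [/\ fh (fzero S) = fzero T,
      (forall x y, fh (fadd S x y) = fadd T (fh x) (fh y)),
      fv (fone S) = fone T,
      (forall v w, fv (fmul S v w) = fmul T (fv v) (fv w))
    & forall v x, fh (fact S v x) = fact T (fv v) (fh x)].

Arguments is_hom : clear implicits.

Definition wreath (T1 T2 : falg) : falg :=
  @FAlg (fH T1 * fH T2) (fV T1 * (fH T1 -> fV T2))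
    (fzero T1, fzero T2)
    (fun x y => (fadd T1 x.1 y.1, fadd T2 x.2 y.2))
    (fone T1, fun _ => fone T2)
    (fun x y => (fmul T1 x.1 y.1, fun h => fmul T2 (x.2 (fact T1 y.1 h)) (y.2 h)))
    (fun v h => (fact T1 v.1 h.1, fact T2 (v.2 h.1) h.2)).

Definition pi_H (T1 T2 : falg) (x : fH (wreath T1 T2)) : fH T1 := x.1.
Definition pi_V (T1 T2 : falg) (x : fV (wreath T1 T2)) : fV T1 := x.1.

(* U_1 = ({0, oo}, {1, 0}) *)
Inductive U1H : Type := U1zero | U1inf.
Inductive U1V : Type := U1one | U1const.
Definition U1add (x y : U1H) : U1H := match x with U1zero => y | U1inf => U1inf end.
Definition U1mul (u v : U1V) : U1V := match u with U1one => v | U1const => U1const end.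
Definition U1act (u : U1V) (x : U1H) : U1H := match u with U1one => x | U1const => U1inf end.
Definition U1 : falg := @FAlg U1H U1V U1zero U1add U1one U1mul U1act.

Definition reach (T : falg) (h h' : fH T) : Prop := exists v, h = fact T v h'.
Definition in_class (T : falg) (h0 h : fH T) : Prop := reach h h0 /\ reach h0 h.
Definition above_class (T : falg) (h0 h : fH T) : Prop := reach h0 h /\ ~ reach h h0.

(* gamma_Gamma: keeps h if h > Gamma, sends every other h to the absorbing oo (None) *)
Definition quot_val (T : falg) (h0 h : fH T) : option (fH T) :=
  if excluded_middle_informative (above_class h0 h) then Some h else None.

Fixpoint relabel_t {A B} (f : forest A -> B) (t : tree A) : tree (A * B) :=
  match t with Node a ts => Node (a, f ts) (map (relabel_t f) ts) end.
Definition relabel {A B} (f : forest A -> B) (s : forest A) : forest (A * B) :=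
  map (relabel_t f) s.

Fixpoint simk {B} (k : nat) (s s' : forest B) : Prop :=
  match k with
  | 0 => True
  | k'.+1 =>
      (forall b t, List.In (Node b t) s ->
         exists t', List.In (Node b t') s' /\ simk k' t t') /\
      (forall b t', List.In (Node b t') s' ->
         exists t, List.In (Node b t) s /\ simk k' t t')
  end.

Definition equiv_gkG {A} (T : falg) (g : forest A -> fH T) (k : nat) (h0 : fH T)
    (s1 s2 : forest A) : Prop :=
  [/\ simk k (relabel (fun t => quot_val h0 (g t)) s1)
             (relabel (fun t => quot_val h0 (g t)) s2),
      in_class h0 (g s1) & in_class h0 (g s2)].

Definition nonconfusing {A} (T : falg) (g : forest A -> fH T) : Prop :=
  exists k, 0 < k /\
    forall (h0 : fH T) (s1 s2 : forest A), equiv_gkG g k h0 s1 s2 -> g s1 = g s2.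

(* Main.v *)
Require Import Defs.
From Stdlib Require Import ClassicalEpsilon.
From mathcomp Require Import all_boot.
Set Implicit Arguments. Unset Strict Implicit.

Lemma u_sub (A : Type) (T : falg)
  (alphaH : fH (free_falg A) -> fH (wreath T U1))
  (alphaV : fV (free_falg A) -> fV (wreath T U1)) :
  is_hom (free_falg A) (wreath T U1) alphaH alphaV ->
  forall s a t, List.In (Node a t) s -> (alphaH s).2 = U1zero ->
  (alphaH t).2 = U1zero.
Proof.
move=> [_ _ _ _ Hact] s a t Hin H0.
have [l [r Es]] := List.in_split _ _ Hin; subst s.
have := Hact (CNode l a (CHole [::] [::]) r) t.
rewrite /= cats0 => E; move: H0; rewrite E /=.
case: (alphaH t).2 => //.
by case: ((alphaV _).2 _).
Qed.

Definition Fl (T : falg) (h0 : fH T) (o : option (fH (wreath T U1))) : option (fH T) :=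
  match o with Some y => quot_val h0 y.1 | None => None end.

Arguments Fl {T}.

Lemma label_eq (T : falg) (h0 : fH T) (x0 : U1H) (y : fH (wreath T U1)) :
  (x0 = U1zero -> y.2 = U1zero) ->
  quot_val h0 y.1 = Fl h0 (@quot_val (wreath T U1) (h0, x0) y).
Proof.
move=> Py; rewrite {2}/quot_val.
case: excluded_middle_informative => Hb //=.
rewrite /quot_val; case: excluded_middle_informative => Ha //.
exfalso; apply: Hb; case: Ha => [[v Hv] Hn]; split.
- exists (v, fun _ => if x0 is U1zero then U1one else U1const).
  rewrite /= -Hv; case: x0 Py => [Py|_] /=; last by [].
  by rewrite Py.
- move=> [[w f] E]; apply: Hn; exists w; by rewrite E.
Qed.

Lemma simk_transfer (A : Type) (T : falg)
  (alphaH : fH (free_falg A) -> fH (wreath T U1))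
  (alphaV : fV (free_falg A) -> fV (wreath T U1)) (h0 : fH T) (x0 : U1H) :
  is_hom (free_falg A) (wreath T U1) alphaH alphaV ->
  forall k (s s' : forest A),
  (x0 = U1zero -> (alphaH s).2 = U1zero) ->
  (x0 = U1zero -> (alphaH s').2 = U1zero) ->
  simk k (relabel (fun t => @quot_val (wreath T U1) (h0, x0) (alphaH t)) s)
         (relabel (fun t => @quot_val (wreath T U1) (h0, x0) (alphaH t)) s') ->
  simk k (relabel (fun t => quot_val h0 (alphaH t).1) s)
         (relabel (fun t => quot_val h0 (alphaH t).1) s').
Proof.
move=> Hh; elim=> [//|k IH] s s' Ps Ps' [H1 H2]; split.
- move=> b t /List.in_map_iff [[a t0] [Eq Hin]].
  case: Eq => <- <-.
  have Pt0 : x0 = U1zero -> (alphaH t0).2 = U1zero.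
    by move=> z; apply: (u_sub Hh Hin); apply: Ps.
  have [t' [Hin' Hs]] := H1 _ _ (List.in_map _ _ _ Hin).
  move: Hin' => /List.in_map_iff [[a2 t2] [Eq2 Hin2]].
  case: Eq2 => Ea El Et.
  have Pt2 : x0 = U1zero -> (alphaH t2).2 = U1zero.
    by move=> z; apply: (u_sub Hh Hin2); apply: Ps'.
  exists (relabel (fun t => quot_val h0 (alphaH t).1) t2); split.
  + apply: (List.in_map_iff _ _ _).2; exists (Node a2 t2); split => //.
    rewrite /= Ea (label_eq h0 Pt2) El -(label_eq h0 Pt0) //.
  + by apply: IH => //; rewrite /relabel Et.
- move=> b t /List.in_map_iff [[a t0] [Eq Hin]].
  case: Eq => <- <-.
  have Pt0 : x0 = U1zero -> (alphaH t0).2 = U1zero.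
    by move=> z; apply: (u_sub Hh Hin); apply: Ps'.
  have [t' [Hin' Hs]] := H2 _ _ (List.in_map _ _ _ Hin).
  move: Hin' => /List.in_map_iff [[a2 t2] [Eq2 Hin2]].
  case: Eq2 => Ea El Et.
  have Pt2 : x0 = U1zero -> (alphaH t2).2 = U1zero.
    by move=> z; apply: (u_sub Hh Hin2); apply: Ps.
  exists (relabel (fun t => quot_val h0 (alphaH t).1) t2); split.
  + apply: (List.in_map_iff _ _ _).2; exists (Node a2 t2); split => //.
    rewrite /= Ea (label_eq h0 Pt2) El -(label_eq h0 Pt0) //.
  + by apply: IH => //; rewrite /relabel Et.
Qed.

Lemma class_u (T : falg) (h0 : fH T) (x0 : U1H) (y : fH (wreath T U1)) :
  @in_class (wreath T U1) (h0, x0) y -> in_class h0 y.1 /\ y.2 = x0.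
Proof.
case: y => h x [[[v f] E1] [[w g] E2]]; case: E1 => E1 E1'; case: E2 => E2 E2'.
split; first by split; [exists v | exists w].
move: E1' E2' => /= ->; case: x0 => //=; by case: (g _); case: (f _).
Qed.

Theorem lemma7 (A : finType) (T : falg)
  (alphaH : fH (free_falg A) -> fH (wreath T U1))
  (alphaV : fV (free_falg A) -> fV (wreath T U1)) :
  is_falg T -> finite_falg T ->
  (forall h : fH T, fadd T h h = h) ->
  (forall g h : fH T, fadd T g h = fadd T h g) ->
  is_hom (free_falg A) (wreath T U1) alphaH alphaV ->
  nonconfusing (fun s => pi_H (alphaH s)) ->
  nonconfusing alphaH.
Proof.
move=> _ _ _ _ Hh [k [Hk Hb]]; exists k; split => // [[h0 x0]] s1 s2 [Hs C1 C2].
have [C1' U1'] := class_u C1; have [C2' U2'] := class_u C2.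
have E : (alphaH s1).1 = (alphaH s2).1.
  apply: (Hb h0); split => //.
  by apply: (simk_transfer Hh) Hs => z; [rewrite U1' | rewrite U2'].
move: E U1' U2'; case: (alphaH s1) => a b; case: (alphaH s2) => c d /= -> -> ->; done.
Qed.
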